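(* Let $\mathcal{D}=(\Omega,\mathcal{B})$ be a supersimple $2$-$(n,4,\lambda)$ design with $n=2\lambda+2$, and let $\infty\in\Omega$. The following are equivalent: (1) $\mathcal{D}$ satisfies property $(\triangle)$; (2) $\mathcal{D}$ is a Boolean quadruple system of order $2^m$ for some integer $m\ge2$; (3) $\pi_\infty(\mathcal{D})=\{1\}$ and $\mathcal{L}_\infty(\mathcal{D})$ is elementary abelian of order $2^m$ for some integer $m\ge2$.
   Context: A $2$-$(n,4,\lambda)$ design $(\Omega,\mathcal{B})$: $n$ points, a multiset of $4$-subsets (lines), every $2$-subset in exactly $\lambda$ lines; supersimple: distinct lines meet in at most two points. For distinct $a,b$ with lines $\{a,b,a_i,b_i\}$ ($1\le i\le\lambda$) through them, the elementary move is $[a,b]:=(a,b)\prod_i(a_i,b_i)\in\operatorname{Sym}(\Omega)$; $[a,a]:=1$. Permutations act on the right, products composed left to right; $[a_0,\dots,a_k]:=[a_0,a_1]\cdots[a_{k-1},a_k]$. $\mathcal{L}_\infty(\mathcal{D})$ is the set of all move sequences starting at $\infty$, and $\pi_\infty(\mathcal{D})$ the set of all move sequences starting and ending at $\infty$. Property $(\triangle)$: if $B_1,B_2\in\mathcal{B}$ with $|B_1\cap B_2|=2$ then $B_1\triangle B_2\in\mathcal{B}$. The Boolean quadruple system of order $2^m$ ($m\ge2$) is the design with point set $\mathbb{F}_2^m$ whose lines are the $4$-subsets $\{v_1,\dots,v_4\}$ with $\sum v_i=0$ (equivalently, the affine planes of $\mathbb{F}_2^m$); ''$\mathcal{D}$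 is'' such a system means up to identification of the point set. *)

(* Defs.v *)
From HB Require Import structures.
From mathcomp Require Import all_boot all_order all_algebra all_fingroup all_solvable.
Set Implicit Arguments. Unset Strict Implicit. Unset Printing Implicit Defensive.

Section Designs.
Variable T : finType.

(* A design on point set T (all of T) with multiset of lines given as a list. *)
Definition is_2_design (k lam : nat) (blocks : seq {set T}) : Prop :=
  (forall B, B \in blocks -> #|B| = k) /\
  (forall a b : T, a != b ->
     count (fun B : {set T} => (a \in B) && (b \in B)) blocks = lam).

Definition supersimple (blocks : seq {set T}) : Prop :=
  forall i j, i < size blocks -> j < size blocks -> i != j ->
    #|nth set0 blocks i :&: nth set0 blocks j| <= 2.

Definition prop_triangle (blocks : seq {set T}) : Prop :=
  forall B1 B2, B1 \in blocks -> B2 \in blocks -> #|B1 :&: B2| = 2 ->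
    (B1 :\: B2) :|: (B2 :\: B1) \in blocks.

Definition other_tperm (B : {set T}) (a b : T) : {perm T} :=
  let C := B :\: [set a; b] in
  let x := odflt a [pick y in C] in
  let y := odflt a [pick z in C :\ x] in
  tperm x y.

Definition move (blocks : seq {set T}) (a b : T) : {perm T} :=
  if a == b then 1%g
  else (tperm a b * \prod_(B <- blocks | (a \in B) && (b \in B))
          other_tperm B a b)%g.

(* [a_0, a_1, ..., a_k] = [a_0,a_1] ... [a_{k-1},a_k] (left to right), given a_0 and
   the list [a_1; ...; a_k]. mathcomp's perm product is left-to-right composition. *)
Fixpoint moveseq (blocks : seq {set T}) (a : T) (s : seq T) : {perm T} :=
  match s with
  | [::] => 1%g
  | b :: s' => (move blocks a b * moveseq blocks b s')%g
  end.

Definition L_at (blocks : seq {set T}) (inf : T) (g : {perm T}) : Prop :=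
  exists s : seq T, g = moveseq blocks inf s.

Definition pi_at (blocks : seq {set T}) (inf : T) (g : {perm T}) : Prop :=
  exists s : seq T, last inf s = inf /\ g = moveseq blocks inf s.

(* D is (up to identification of points) the Boolean quadruple system of order 2^m:
   lines are exactly the 4-subsets with zero sum in F_2^m. *)
Definition is_BQS (blocks : seq {set T}) (m : nat) : Prop :=
  exists f : T -> 'rV['F_2]_m, bijective f /\
    forall B : {set T},
      (B \in blocks) = (#|B| == 4) && (\sum_(x in B) f x == 0)%R.

End Designs.

(* Main.v *)
Require Import Defs.
From HB Require Import structures.
From mathcomp Require Import all_boot all_order all_algebra all_fingroup all_solvable.
From mathcomp Require Import zify mxabelem.
Set Implicit Arguments. Unset Strict Implicit. Unset Printing Implicit Defensive.

Ltac neqs := repeat match goal with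
 | H : is_true (?a != ?b) |- context [?a == ?b] => rewrite (negbTE H)
 | H : is_true (?a != ?b) |- context [?b == ?a] => rewrite (eq_sym b a) (negbTE H)
 end.
Ltac setdec := apply/setP => ?; rewrite !inE;
  repeat (case: eqP => [->|?]; neqs; rewrite ?eqxx /=); try done; do ?case: eqP => //.

Section Basic.
Variables (T : finType) (lam : nat) (blocks : seq {set T}).
Hypotheses (lam_gt0 : 0 < lam) (Hdes : is_2_design 4 lam blocks)
  (Hss : supersimple blocks) (HT : #|T| = 2 * lam + 2).

Local Notation mv := (move blocks).
Definition Blk (a b c d : T) := [set a; b; c; d] \in blocks.

Lemma bcard B : B \in blocks -> #|B| = 4.
Proof. by case: Hdes => H _; apply: H. Qed.

Lemma beq B1 B2 : B1 \in blocks -> B2 \in blocks -> 2 < #|B1 :&: B2| -> B1 = B2.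
Proof.
move=> H1 H2 Hc; apply/eqP; apply/negPn/negP => Hne.
have Hi : index B1 blocks < size blocks by rewrite index_mem.
have Hj : index B2 blocks < size blocks by rewrite index_mem.
have Hij : index B1 blocks != index B2 blocks.
  apply/negP => /eqP E; move/negP: Hne; apply.
  by rewrite -(nth_index set0 H1) E nth_index.
have := Hss Hi Hj Hij.
by rewrite !nth_index // leqNgt Hc.
Qed.

Lemma buniq : uniq blocks.
Proof.
apply/negPn/negP => /(uniqPn set0) [i [j [Hij Hj E]]].
have Hi : i < size blocks by apply: ltn_trans Hij Hj.
have := Hss Hi Hj. rewrite (ltn_eqF Hij) => /(_ isT).
by rewrite E setIid bcard // mem_nth.
Qed.

Lemma c4 (a b c d : T) : #|[set a; b; c; d]| = 4 ->
  [/\ a != b, a != c, a != d & [/\ b != c, b != d & c != d]].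
Proof.
have -> : [set a; b; c; d] = a |: (b |: (c |: [set d])) by setdec.
rewrite !cardsU1 cards1 !inE.
by case: (a == b); case: (a==c); case: (a==d); case: (b==c); case: (b==d); case: (c==d).
Qed.

Lemma blkc a b c d : Blk a b c d -> [/\ a != b, a != c, a != d & [/\ b != c, b != d & c != d]].
Proof. by move=> H; apply: c4; apply: bcard. Qed.

Lemma blk_perm a b c d a' b' c' d' : Blk a b c d ->
  [set a; b; c; d] = [set a'; b'; c'; d'] -> Blk a' b' c' d'.
Proof. by rewrite /Blk => H <-. Qed.

Lemma card3 (a b c : T) : a != b -> a != c -> b != c -> #|[set a; b; c]| = 3.
Proof.
have -> : [set a; b; c] = a |: (b |: [set c]) by setdec.
by move=> *; rewrite !cardsU1 cards1 !inE; neqs. Qed.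

Lemma three_eq B1 B2 a b c : B1 \in blocks -> B2 \in blocks ->
  a != b -> a != c -> b != c -> a \in B1 -> b \in B1 -> c \in B1 ->
  a \in B2 -> b \in B2 -> c \in B2 -> B1 = B2.
Proof.
move=> H1 H2 ab ac bc a1 b1 c1 a2 b2 c2; apply: beq => //.
rewrite -(card3 ab ac bc); apply: subset_leq_card; apply/subsetP => x.
by rewrite !inE => /orP[/orP[]|]/eqP->; rewrite ?a1 ?a2 ?b1 ?b2 ?c1 ?c2.
Qed.

Lemma cardD2 B a b : B \in blocks -> a \in B -> b \in B -> a != b ->
  #|B :\: [set a; b]| = 2.
Proof.
move=> HB Ha Hb Hab; rewrite cardsD bcard //.
have -> : B :&: [set a; b] = [set a; b].
  apply/setIidPr; apply/subsetP => x; rewrite !inE => /orP[]/eqP->; done.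
by rewrite cards2 Hab.
Qed.

Lemma bOT B a b : B \in blocks -> a \in B -> b \in B -> a != b ->
  exists x y, [/\ B = [set a; b; x; y], #|[set a; b; x; y]| = 4 &
    other_tperm B a b = tperm x y].
Proof.
move=> HB Ha Hb Hab.
have /cards2P [x [y [Hxy EC]]] : #|B :\: [set a; b]| == 2 by rewrite cardD2.
have EB : B = [set a; b; x; y].
  have EI : B :&: [set a; b] = [set a; b].
    by apply/setIidPr; apply/subsetP => z; rewrite !inE => /orP[]/eqP->.
  have : B = B :&: [set a; b] :|: B :\: [set a; b] by rewrite setID.
  rewrite EI EC => ->; setdec.
exists x, y; split => //; first by rewrite -EB bcard.
rewrite /other_tperm EC.
case: pickP => [z|]; last by move=> H; have := H x; rewrite !inE eqxx.
rewrite !inE => /orP[]/eqP-> /=.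
- case: pickP => [w|]; last by move=> H; have := H y; rewrite !inE eqxx orbT andbT eq_sym Hxy.
  rewrite !inE => /andP[Hw /orP[]/eqP Ew]; first by rewrite Ew eqxx in Hw.
  by rewrite Ew.
- case: pickP => [w|]; last by move=> H; have := H x; rewrite !inE eqxx ?orbT ?andbT Hxy.
  rewrite !inE => /andP[Hw /orP[]/eqP Ew]; last by rewrite Ew eqxx in Hw.
  by rewrite Ew tpermC.
Qed.


Lemma mv_aa a : mv a a = 1%g.
Proof. by rewrite /move eqxx. Qed.

Lemma mv_sym a b : mv a b = mv b a.
Proof.
rewrite /move eq_sym; case: eqP => // /eqP Hba; rewrite tpermC; congr (_ * _)%g.
rewrite big_seq_cond [RHS]big_seq_cond.
apply: eq_big => [B|B]; first by rewrite [(a \in B) && _]andbC.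
move=> /andP[HB /andP[Ha Hb]]; have Hab : a != b by rewrite eq_sym.
have [x [y [EB C4 ->]]] := bOT HB Ha Hb Hab.
have [x' [y' [EB' C4' ->]]] := bOT HB Hb Ha Hba.
have [ab ax ay [bx by' xy]] := c4 C4.
have [_ bx' by'' [ax' ay' xy']] := c4 C4'.
have : x' \in B by rewrite EB' !inE eqxx ?orbT.
have : y' \in B by rewrite EB' !inE eqxx ?orbT.
rewrite EB !inE; neqs; rewrite /=.
move=> /orP[]/eqP E1 /orP[]/eqP E2; subst; first [done | by rewrite tpermC | by rewrite eqxx in xy' | by rewrite eqxx in xy].

Qed.

Lemma prod_fix (s : seq {set T}) (F : {set T} -> {perm T}) p :
  (forall B, B \in s -> F B p = p) -> (\prod_(B <- s) F B)%g p = p.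
Proof.
elim: s => [|B s IH] H; first by rewrite big_nil perm1.
rewrite big_cons permM H ?mem_head // IH // => B' HB'.
by apply: H; rewrite inE HB' orbT.
Qed.

Lemma prod_eval (s : seq {set T}) (F : {set T} -> {perm T}) B0 p q :
  uniq s -> B0 \in s -> F B0 p = q ->
  (forall B, B \in s -> B != B0 -> F B p = p /\ F B q = q) ->
  (\prod_(B <- s) F B)%g p = q.
Proof.
elim: s => // B s IH /= /andP[HBs Hu]; rewrite inE => HB0 HF Hoth.
rewrite big_cons permM.
case: (eqVneq B B0) => [EB|NB].
- subst B; rewrite HF prod_fix // => B' HB'.
  apply: (proj2 (Hoth B' _ _)); first by rewrite inE HB' orbT.
  by apply/eqP => E; rewrite -E HB' in HBs.
- have HB0s : B0 \in s by case/orP: HB0 => // /eqP E; rewrite E eqxx in NB.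
  rewrite (proj1 (Hoth B (mem_head _ _) NB)).
  by apply: IH => // B' HB' NB'; apply: Hoth => //; rewrite inE HB' orbT.
Qed.

Lemma ot_fix B a b z : B \in blocks -> a \in B -> b \in B -> a != b ->
  z \notin B :\: [set a; b] -> other_tperm B a b z = z.
Proof.
move=> HB Ha Hb Hab; have [x [y [EB C4 ->]]] := bOT HB Ha Hb Hab.
case/c4: C4 => ab ax ay [bx by' xy].
rewrite EB !inE negb_and negbK => Hz.
have zx : z != x.
  apply/eqP => E; subst z; move: Hz; neqs; by rewrite eqxx ?orbT.
have zy : z != y.
  apply/eqP => E; subst z; move: Hz; neqs; by rewrite eqxx ?orbT.
by rewrite tpermD // eq_sym.
Qed.

Lemma mv_ab a b : a != b -> mv a b a = b /\ mv a b b = a.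
Proof.
move=> Hab; rewrite /move (negbTE Hab) !permM tpermL tpermR.
split; rewrite -big_filter; apply: prod_fix => B; rewrite mem_filter => /andP[/andP[Ha Hb] HB];
  apply: ot_fix => //; by rewrite !inE eqxx ?orbT.
Qed.

Lemma Ucard a b (s : seq {set T}) : a != b -> uniq s -> {subset s <= blocks} ->
  (forall B, B \in s -> (a \in B) && (b \in B)) ->
  #|\bigcup_(B <- s) (B :\: [set a; b])| = 2 * size s.
Proof.
move=> Hab; elim: s => [|B s IH] /=; first by rewrite big_nil cards0.
move=> /andP[HBs Hu] Hsub HP.
have HB : B \in blocks by apply: Hsub; rewrite mem_head.
have /andP[Ha Hb] := HP B (mem_head _ _).
rewrite big_cons cardsU cardD2 // IH //; last first.
- by move=> B' HB'; apply: HP; rewrite inE HB' orbT.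
- by move=> B' HB'; apply: Hsub; rewrite inE HB' orbT.
have -> : (B :\: [set a; b]) :&: \bigcup_(B0 <- s) (B0 :\: [set a; b]) = set0.
  apply/setP => z; rewrite inE [z \in set0]inE; apply/negP => /andP[Hz].
  rewrite bigcup_seq => /bigcupP [B' HB' Hz'].
  have HB'b : B' \in blocks by apply: Hsub; rewrite inE HB' orbT.
  have /andP[Ha' Hb'] : (a \in B') && (b \in B') by apply: HP; rewrite inE HB' orbT.
  move: Hz Hz'; rewrite !inE => /andP[/norP[za zb] zB] /andP[_ zB'].
  have E : B = B'.
    by apply: (three_eq (a:=a) (b:=b) (c:=z)) => //; rewrite eq_sym.
  by rewrite E HB' in HBs.
by rewrite cards0 subn0 /=; lia.
Qed.

Lemma cover a b p : a != b -> p != a -> p != b -> exists q, Blk a b p q.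
Proof.
move=> Hab Hpa Hpb.
set s := filter (fun B : {set T} => (a \in B) && (b \in B)) blocks.
have Hsz : size s = lam by rewrite size_filter; case: Hdes => _ ->.
have Hus : uniq s by rewrite filter_uniq // buniq.
have Hsub : {subset s <= blocks} by move=> B; rewrite mem_filter => /andP[].
have HP : forall B, B \in s -> (a \in B) && (b \in B)
  by move=> B; rewrite mem_filter => /andP[].
case: (boolP (has (fun B : {set T} => p \in B) s)) => [/hasP [B HBs HpB]|Hn].
- have /andP[Ha Hb] := HP B HBs.
  have HB := Hsub B HBs.
  have [x [y [EB C4 _]]] := bOT HB Ha Hb Hab.
  move: HpB; rewrite EB !inE (negbTE Hpa) (negbTE Hpb) /= => /orP[]/eqP Ep.
  + by exists y; rewrite /Blk Ep -EB.
  + exists x; rewrite /Blk Ep.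
    suff -> : [set a; b; y; x] = B by [].
    by rewrite EB; setdec.
- have Hc := Ucard Hab Hus Hsub HP.
  have Hsubc : \bigcup_(B <- s) (B :\: [set a; b]) \subset ~: [set a; b; p].
    apply/subsetP => z; rewrite bigcup_seq => /bigcupP [B HBs Hz].
    rewrite !inE negb_or; move: Hz; rewrite !inE => /andP[/norP[za zb] zB].
    rewrite negb_or za zb /=; apply/eqP => Ez; move/hasPn: Hn => /(_ B HBs).
    by rewrite -Ez zB.
  have := subset_leq_card Hsubc.
  have Hc3 := cardsC [set a; b; p].
  have ap : a != p by rewrite eq_sym.  have bp : b != p by rewrite eq_sym. rewrite card3 // in Hc3.
  rewrite Hc Hsz => H; exfalso; lia.
Qed.

Lemma mv_p a b p : a != b -> p != a -> p != b -> Blk a b p (mv a b p).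
Proof.
move=> Hab Hpa Hpb; have [q Hq] := cover Hab Hpa Hpb.
suff -> : mv a b p = q by [].
have [ab ap aq [bp bq pq]] := blkc Hq.
rewrite /move (negbTE Hab) permM tpermD ?(eq_sym a) ?(eq_sym b) //.
rewrite -big_filter.
have HB0 : [set a; b; p; q] \in blocks by [].
have Ha : a \in [set a; b; p; q] by rewrite !inE eqxx.
have Hb : b \in [set a; b; p; q] by rewrite !inE eqxx ?orbT.
have Hp : p \in [set a; b; p; q] by rewrite !inE eqxx ?orbT.
have Hq' : q \in [set a; b; p; q] by rewrite !inE eqxx ?orbT.
apply: (prod_eval (B0 := [set a; b; p; q])).
- by rewrite filter_uniq // buniq.
- by rewrite mem_filter Ha Hb.
- have [x [y [EB C4 ->]]] := bOT HB0 Ha Hb Hab.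
  have [_ _ _ [_ _ xy]] := c4 C4.
  move: (Hp) (Hq'); rewrite EB !inE; neqs; rewrite /=.
  move=> /orP[]/eqP E1 /orP[]/eqP E2; subst; rewrite ?tpermL ?tpermR //; by rewrite eqxx in pq.

- move=> B; rewrite mem_filter => /andP[/andP[HaB HbB] HB] NB.
  split; apply: ot_fix => //; rewrite !inE negb_and negbK; apply/orP; right;
    apply/negP => Hz; move/eqP: NB; apply.
  + apply: (three_eq (a:=a) (b:=b) (c:=p)) => //; by rewrite ?inE ?eqxx ?orbT // eq_sym.
  + apply: (three_eq (a:=a) (b:=b) (c:=q)) => //; by rewrite ?inE ?eqxx ?orbT // eq_sym.
Qed.

Lemma blk_unique a b c d e : Blk a b c d -> Blk a b c e -> d = e.
Proof.
move=> H1 H2; have [ab ac ad [bc bd cd]] := blkc H1.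
have [_ _ ae [_ be ce]] := blkc H2.
have E : [set a; b; c; d] = [set a; b; c; e].
  by apply: (three_eq (a := a) (b := b) (c := c)) => //; rewrite !inE eqxx ?orbT.
have : e \in [set a; b; c; d] by rewrite E !inE eqxx ?orbT.
rewrite !inE; neqs; rewrite /=.
by move/eqP.
Qed.

Lemma mv_blk a b p q : Blk a b p q -> mv a b p = q.
Proof.
move=> H; have [ab ap aq [bp bq pq]] := blkc H.
apply: blk_unique (mv_p _ _ _) H; rewrite // eq_sym //.
Qed.


Lemma mv_blk2 a b p q : Blk a b p q -> mv a b q = p.
Proof. by move=> H; apply: mv_blk; apply: (blk_perm H); setdec. Qed.

Lemma mv_inv a b : (mv a b * mv a b = 1)%g.
Proof.
case: (eqVneq a b) => [->|ab]; first by rewrite mv_aa mulg1.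
apply/permP => p; rewrite permM perm1.
have [Ha Hb] := mv_ab ab.
case: (eqVneq p a) => [->|pa]; first by rewrite Ha Hb.
case: (eqVneq p b) => [->|pb]; first by rewrite Hb Ha.
exact: mv_blk2 (mv_p ab pa pb).
Qed.

Lemma tri a b c p q r : prop_triangle blocks -> Blk c a p q -> Blk c b q r ->
  a != b -> a != r -> p != b -> p != r -> Blk a b p r.
Proof.
move=> Htr H1 H2 ab ar pb pr.
have [ca cp cq [ap aq pq]] := blkc H1.
have [cb cq' cr [bq br qr]] := blkc H2.
have := Htr _ _ H1 H2.
have -> : [set c; a; p; q] :&: [set c; b; q; r] = [set c; q] by setdec.
rewrite cards2 cq => /(_ erefl).
suff -> : ([set c; a; p; q] :\: [set c; b; q; r]) :|: ([set c; b; q; r] :\: [set c; a; p; q])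
  = [set a; b; p; r] by [].
by setdec.
Qed.

Lemma deltaK : prop_triangle blocks -> forall a b c, mv a b = (mv c a * mv c b)%g.
Proof.
move=> Htr a b c.
case: (eqVneq a b) => [->|ab]; first by rewrite mv_aa mv_inv.
case: (eqVneq c a) => [->|ca]; first by rewrite mv_aa mul1g.
case: (eqVneq c b) => [->|cb]; first by rewrite mv_aa mulg1 mv_sym.
apply/permP => p; rewrite permM; apply/esym.
have [Ha Hb] := mv_ab ab.
have [Hca Hac] := mv_ab ca.
have [Hcb Hbc] := mv_ab cb.
case: (eqVneq p a) => [->|pa]; first by rewrite Hac Hcb Ha.
case: (eqVneq p b) => [->|pb].
  have bc : b != c by rewrite eq_sym.
  have ba : b != a by rewrite eq_sym.
  have H := mv_p ca bc ba.
  set d := mv c a b in H *.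
  rewrite Hb; apply: mv_blk; apply: (blk_perm H); have [? ? ? [? ? ?]] := blkc H.
  by setdec.
case: (eqVneq p c) => [->|pc].
  rewrite Hca.
  have H := mv_p ab ca cb.
  set r := mv a b c in H *.
  apply: mv_blk; apply: (blk_perm H); have [? ? ? [? ? ?]] := blkc H.
  by setdec.
have Hq := mv_p ca pc pa.
set q := mv c a p in Hq *.
have [_ _ cq [_ _ pq]] := blkc Hq.
case: (eqVneq q b) => [Eq|qb].
  rewrite Eq Hbc; apply/esym; apply: mv_blk; apply: (blk_perm Hq); rewrite Eq.
  have [? ? ? [? ? ?]] := blkc Hq. rewrite Eq in cq pq. by setdec.
have qc : q != c by rewrite eq_sym.
have Hr := mv_p cb qc qb.
set r := mv c b q in Hr *.
have [_ _ cr [_ _ qr]] := blkc Hr.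
apply/esym; apply: mv_blk; apply: (tri Htr Hq Hr) => //.
- apply/eqP => E; rewrite -E in Hr.
  have H1 : Blk c a q p by apply: (blk_perm Hq); setdec.
  have H2 : Blk c a q b by apply: (blk_perm Hr); setdec.
  by move: pb; rewrite (blk_unique H1 H2) eqxx.
- apply/eqP => E; rewrite -E in Hr.
  have H1 : Blk c q p a by apply: (blk_perm Hq); setdec.
  have H2 : Blk c q p b by apply: (blk_perm Hr); setdec.
  by move: ab; rewrite (blk_unique H1 H2) eqxx.
Qed.



Lemma set4 (B : {set T}) : #|B| = 4 -> exists a b c d, B = [set a; b; c; d].
Proof.
move=> HB; have : 0 < #|B| by rewrite HB.
case/card_gt0P => a Ha.
have HB1 : #|B :\ a| = 3 by have := cardsD1 a B; rewrite Ha HB /=; lia.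
have : 0 < #|B :\ a| by rewrite HB1.
case/card_gt0P => b Hb.
have HB2 : #|B :\ a :\ b| == 2 by have := cardsD1 b (B :\ a); rewrite Hb HB1 /=; lia.
case/cards2P: HB2 => c [d [_ Ecd]].
exists a, b, c, d.
rewrite -(setD1K Ha) -(setD1K Hb) Ecd; by setdec.
Qed.



Definition KP := forall a b c, mv a b = (mv c a * mv c b)%g.

Lemma ab_comm (G : {group {perm T}}) x y : abelian G -> x \in G -> y \in G -> commute x y.
Proof. by move=> /centsP cGG Hx Hy; apply: cGG. Qed.

Lemma mv_c0 c p : mv c p c = p.
Proof.
case: (eqVneq c p) => [->|cp]; first by rewrite mv_aa perm1.
by case: (mv_ab cp).
Qed.

Lemma inv_mv a b : (mv a b)^-1%g = mv a b.
Proof. by apply/eqP; rewrite eq_invg_mul mv_inv. Qed.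

Section KSec.
Hypothesis HK : KP.

Lemma mv_comm c x y : commute (mv c x) (mv c y).
Proof. by rewrite /commute -!HK mv_sym. Qed.

Lemma fix1 c (h : {perm T}) : (forall p, commute (mv c p) h) -> h c = c -> h = 1%g.
Proof.
move=> Hc Hh; apply/permP => p; rewrite perm1.
by rewrite -{1}(mv_c0 c p) -permM Hc permM Hh mv_c0.
Qed.

Lemma mvEq a b c d : mv a b c = d -> mv a b = mv c d.
Proof.
move=> Hd.
have Hh : (mv a b * mv c d = 1)%g.
  apply: (fix1 (c := c)).
  - move=> p; rewrite (HK a b c); apply: commuteM; first apply: commuteM;
      exact: mv_comm.
  - by rewrite permM Hd mv_sym mv_c0.
by rewrite -[mv a b]mulg1 -(mv_inv c d) mulgA Hh mul1g.
Qed.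

Lemma mv_trans a b l : (mv a b * mv b l)%g = mv a l.
Proof. by rewrite (HK a l b) mv_sym. Qed.

Lemma moveseqK a s : moveseq blocks a s = mv a (last a s).
Proof.
elim: s a => [|b s IH] a /=; first by rewrite mv_aa.
by rewrite IH mv_trans.
Qed.

Variable inf : T.
Definition Lset := [set mv inf x | x : T].

Lemma Lset_gs : group_set Lset.
Proof.
apply/group_setP; split.
  by apply/imsetP; exists inf => //; rewrite mv_aa.
move=> g h /imsetP [x _ ->] /imsetP [y _ ->].
rewrite -HK; apply/imsetP; exists (mv x y inf) => //.
exact: mvEq.
Qed.

Definition LG : {group {perm T}} := Group Lset_gs.

Lemma LG_mem g : g \in LG <-> L_at blocks inf g.
Proof.
split.
- by move=> /imsetP [x _ ->]; exists [:: x] => /=; rewrite mulg1.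
- move=> [s ->]; rewrite moveseqK; apply/imsetP; by exists (last inf s).
Qed.

Lemma LG_pi g : pi_at blocks inf g <-> g = 1%g.
Proof.
split.
- by move=> [s [Hl ->]]; rewrite moveseqK Hl mv_aa.
- by move=> ->; exists [::].
Qed.

Lemma LG_abelem : (2.-abelem LG)%g.
Proof.
rewrite abelemE //; apply/andP; split.
- apply/centsP => x /imsetP [a _ ->] y /imsetP [b _ ->]; exact: mv_comm.
- by apply/exponentP => x /imsetP [a _ ->]; rewrite expgS expg1 mv_inv.
Qed.

Lemma LG_card : #|LG| = #|T|.
Proof.
rewrite /= /Lset card_imset //; last first.
  by move=> x y E; rewrite -(mv_c0 inf x) E mv_c0.
Qed.


Lemma LG_pow : exists2 m, 2 <= m & #|LG| = 2 ^ m.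
Proof.
have : (2.-group LG)%g by apply: abelem_pgroup; apply: LG_abelem.
rewrite /pgroup => /p_natP [k Hk].
exists k => //; move: Hk; rewrite LG_card HT.
case: k => [|[|k]] //= H; lia.
Qed.

Lemma K3 : (forall g, pi_at blocks inf g <-> g = 1%g) /\
          exists2 m, 2 <= m &
            exists G : {group {perm T}},
              [/\ forall g, g \in G <-> L_at blocks inf g,
                  (2.-abelem G)%g & #|G| = 2 ^ m].
Proof.
split; first exact: LG_pi.
have [m Hm Hc] := LG_pow.
exists m => //; exists LG; split => //; [exact: LG_mem | exact: LG_abelem].
Qed.

Lemma KBQS : exists2 m, 2 <= m & is_BQS blocks m.
Proof.
have abG := LG_abelem.
have ntG : (LG :!=: 1)%g by rewrite trivg_card1 LG_card HT; lia.
have [k Hk Hc] := LG_pow.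
exists ('dim LG).
  by rewrite (dim_abelemE abG ntG) Hc pfactorK.
pose f (x : T) := abelem_rV abG ntG (mv inf x).
have Gmem : forall x, mv inf x \in LG by move=> x; apply/imsetP; exists x.
have finj : injective f.
  move=> x y /(abelem_rV_inj (Gmem x) (Gmem y)) E.
  by rewrite -(mv_c0 inf x) E mv_c0.
exists f; split.
  by apply: inj_card_bij => //; rewrite (card_abelem_rV abG ntG) LG_card.
move=> B.
case: (boolP (#|B| == 4)) => [/eqP H4|H4]; last first.
  by apply/negP => HB; rewrite bcard in H4.
have [a [b [c [d EB]]]] := set4 H4.
rewrite EB in H4 *; have [ab ac ad [bc bd cd]] := c4 H4; rewrite andTb.
have -> : [set a; b; c; d] = a |: (b |: (c |: [set d])) by setdec.
rewrite !big_setU1 ?big_set1 /=; try by rewrite !inE; neqs.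
rewrite /f /= -(abelem_rV_M abG ntG (Gmem c) (Gmem d)) -(abelem_rV_M abG ntG (Gmem b) (groupM (Gmem c) (Gmem d))) -(abelem_rV_M abG ntG (Gmem a) (groupM (Gmem b) (groupM (Gmem c) (Gmem d)))).
rewrite -(abelem_rV_1 abG ntG) (inj_in_eq (@abelem_rV_inj _ _ _ abG ntG)) ?groupM ?group1 //.
rewrite !mulgA -HK -mulgA -HK -eq_invg_mul inv_mv.
have -> : a |: (b |: (c |: [set d])) = [set a; b; c; d] by setdec.
apply/idP/eqP.
- by move=> Hb; apply: mvEq; apply: mv_blk.
- move=> E; have ca : c != a by rewrite eq_sym.
  have cb : c != b by rewrite eq_sym.
  have := mv_p ab ca cb; rewrite E; by have [-> _] := mv_ab cd.
Qed.

End KSec.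
Lemma KDelta : KP -> prop_triangle blocks.
Proof.
move=> HK B1 B2 H1 H2 HI.
have /cards2P [a [b [ab EI]]] : #|B1 :&: B2| == 2 by rewrite HI.
have NI : forall z, z \in B1 -> z \in B2 -> (z == a) || (z == b).
  move=> z z1 z2; have : z \in B1 :&: B2 by rewrite inE z1 z2.
  by rewrite EI !inE.
have : a \in B1 :&: B2 by rewrite EI !inE eqxx.
have : b \in B1 :&: B2 by rewrite EI !inE eqxx orbT.
rewrite !inE => /andP[Hb1 Hb2] /andP[Ha1 Ha2].
have [c [d [E1 C1 _]]] := bOT H1 Ha1 Hb1 ab.
have [e [f [E2 C2 _]]] := bOT H2 Ha2 Hb2 ab.
have [_ ac ad [bc bd cd]] := c4 C1.
have [_ ae af [be bf ef]] := c4 C2.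
have NI' : forall z, z \in [set a; b; c; d] -> z \in [set a; b; e; f] -> (z == a) || (z == b).
  by rewrite -E1 -E2.
have ce : c != e.
  apply/eqP => E; subst e; have := NI' c; rewrite !inE eqxx !orbT /=; neqs.
  by move=> /(_ isT isT).
have cf : c != f.
  apply/eqP => E; subst f; have := NI' c; rewrite !inE eqxx !orbT /=; neqs.
  by move=> /(_ isT isT).
have de : d != e.
  apply/eqP => E; subst e; have := NI' d; rewrite !inE eqxx !orbT /=; neqs.
  by move=> /(_ isT isT).
have df : d != f.
  apply/eqP => E; subst f; have := NI' d; rewrite !inE eqxx !orbT /=; neqs.
  by move=> /(_ isT isT).
have Bl1 : Blk a b c d by rewrite /Blk -E1.
have Bl2 : Blk a b e f by rewrite /Blk -E2.
have Ecd : mv c d = mv e f by rewrite -(mvEq HK (mv_blk Bl1)) (mvEq HK (mv_blk Bl2)).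
have ec : e != c by rewrite eq_sym.
have ed : e != d by rewrite eq_sym.
have := mv_p cd ec ed; rewrite Ecd; have [-> _] := mv_ab ef.
rewrite /Blk E1 E2.
suff -> : ([set a; b; c; d] :\: [set a; b; e; f]) :|: ([set a; b; e; f] :\: [set a; b; c; d])
  = [set c; d; e; f] by [].
by setdec.
Qed.


Lemma threeK inf : ((forall g, pi_at blocks inf g <-> g = 1%g) /\
          exists2 m, 2 <= m &
            exists G : {group {perm T}},
              [/\ forall g, g \in G <-> L_at blocks inf g,
                  (2.-abelem G)%g & #|G| = 2 ^ m]) -> KP.
Proof.
move=> [Hpi [m _ [G [HG abG _]]]].
have Xmem : forall x, mv inf x \in G.
  by move=> x; apply/HG; exists [:: x] => /=; rewrite mulg1.
have HX : forall a b, mv a b = (mv inf a * mv inf b)%g.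
  move=> a b.
  have H : pi_at blocks inf (moveseq blocks inf [:: a; b; inf]) by exists [:: a; b; inf].
  move/Hpi: H; rewrite /= mulg1 => H.
  have E1 : (mv a b * mv b inf)%g = mv inf a.
    by rewrite -[(mv a b * mv b inf)%g]mul1g -(mv_inv inf a) -mulgA H mulg1.
  by rewrite -[mv a b]mulg1 -(mv_inv b inf) mulgA E1 (mv_sym b inf).
have abel := abelem_abelian abG.
move=> a b c; rewrite (HX a b) (HX c a) (HX c b).
have C := ab_comm abel (Xmem a) (Xmem c).
by rewrite mulgA -(mulgA (mv inf c)) C mulgA mv_inv mul1g.
Qed.

Lemma F2_double n (x : 'rV['F_2]_n) : (x + x = 0)%R.
Proof.
rewrite -[x]GRing.scale1r -GRing.scalerDl.
have -> : (1 + 1 : 'F_2)%R = 0%R by apply/val_inj.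
by rewrite GRing.scale0r.
Qed.

Lemma BQSDelta m : is_BQS blocks m -> prop_triangle blocks.
Proof.
move=> [f [_ Hf]] B1 B2 H1 H2 HI.
move: (H1) (H2); rewrite !Hf => /andP[/eqP c1 /eqP s1] /andP[/eqP c2 /eqP s2].
apply/andP; split.
- rewrite cardsU.
  have -> : (B1 :\: B2) :&: (B2 :\: B1) = set0.
    by apply/setP => x; rewrite !inE; case: (x \in B1); case: (x \in B2).
  rewrite cards0 subn0 !cardsD c1 c2 [B2 :&: B1]setIC. move: HI. set k := #|_ :&: _|. move=> ->. done.
- set D := _ :|: _.
  rewrite (big_setID B1).
  have -> : D :&: B1 = B1 :\: B2.
    by apply/setP => x; rewrite !inE; case: (x \in B1); case: (x \in B2).
  have -> : D :\: B1 = B2 :\: B1.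
    by apply/setP => x; rewrite !inE; case: (x \in B1); case: (x \in B2).
  have e1 : (\sum_(i in B1) f i = \sum_(i in B1 :&: B2) f i + \sum_(i in B1 :\: B2) f i)%R
    by apply: big_setID.
  have e2 : (\sum_(i in B2) f i = \sum_(i in B1 :&: B2) f i + \sum_(i in B2 :\: B1) f i)%R
    by rewrite setIC; apply: big_setID.
  rewrite e1 in s1; rewrite e2 in s2.
  have key : forall I u v : 'rV['F_2]_m, (I + u = 0 -> I + v = 0 -> u + v = 0)%R.
    move=> I u v h1 h2.
    by rewrite -[(u + v)%R]GRing.add0r -{1}(F2_double I) GRing.addrACA h1 h2 GRing.addr0.
  by apply/eqP; apply: key s1 s2.
Qed.


Lemma main_sec inf :
  [/\ (prop_triangle blocks <-> exists2 m, 2 <= m & is_BQS blocks m),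
      ((exists2 m, 2 <= m & is_BQS blocks m) <->
         ((forall g, pi_at blocks inf g <-> g = 1%g) /\
          exists2 m, 2 <= m &
            exists G : {group {perm T}},
              [/\ forall g, g \in G <-> L_at blocks inf g,
                  (2.-abelem G)%g & #|G| = 2 ^ m]))
    & (prop_triangle blocks <->
         ((forall g, pi_at blocks inf g <-> g = 1%g) /\
          exists2 m, 2 <= m &
            exists G : {group {perm T}},
              [/\ forall g, g \in G <-> L_at blocks inf g,
                  (2.-abelem G)%g & #|G| = 2 ^ m]))].
Proof using lam_gt0 Hdes Hss HT.
split.
- split; [move=> H; exact: (KBQS (deltaK H) inf) | move=> [m _ H]; exact: BQSDelta H].
- split; [move=> [m _ H]; exact: (K3 (deltaK (BQSDelta H)) inf)
         | move=> H; exact: (KBQS (threeK H) inf)].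
- split; [move=> H; exact: (K3 (deltaK H) inf) | move=> H; exact: KDelta (threeK H)].
Qed.

End Basic.

Theorem proposition5p3 (T : finType) (lam : nat) (blocks : seq {set T}) (inf : T) :
  0 < lam ->
  is_2_design 4 lam blocks -> supersimple blocks ->
  #|T| = 2 * lam + 2 ->
  [/\ (prop_triangle blocks <-> exists2 m, 2 <= m & is_BQS blocks m),
      ((exists2 m, 2 <= m & is_BQS blocks m) <->
         ((forall g, pi_at blocks inf g <-> g = 1%g) /\
          exists2 m, 2 <= m &
            exists G : {group {perm T}},
              [/\ forall g, g \in G <-> L_at blocks inf g,
                  (2.-abelem G)%g & #|G| = 2 ^ m]))
    & (prop_triangle blocks <->
         ((forall g, pi_at blocks inf g <-> g = 1%g) /\
          exists2 m, 2 <= m &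
            exists G : {group {perm T}},
              [/\ forall g, g \in G <-> L_at blocks inf g,
                  (2.-abelem G)%g & #|G| = 2 ^ m]))].
Proof.
move=> h1 h2 h3 h4; exact: (main_sec h1 h2 h3 h4 inf).
Qed.
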